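(* Let $K>1$, $M\ge1$, and define $\tilde{\bm{\psi}}^M:\mathbb{R}^{K+M}\to\mathbb{R}^{K+M}$ by $$\tilde{\psi}^M_y(\bm{u})=\frac{\exp(u_y)}{\sum_{y'=1}^K\exp(u_{y'})}\ \ (1\le y\le K),\qquad \tilde{\psi}^M_y(\bm{u})=\frac{\exp(u_y)}{\sum_{y'=1}^{K}\exp(u_{y'})+\exp(u_y)-\max_{y'\in\{1,\dots,K\}}\exp(u_{y'})}\ \ (K+1\le y\le K+M).$$ Then for every $\bm{u}\in\mathbb{R}^{K+M}$: (i) $\tilde{\bm{\psi}}^M(\bm{u})\in\Delta^K\times[0,1]^M$; (ii) $\mathop{\rm argmax}_{y\in\{1,\dots,K+M\}}\tilde{\psi}^M_y(\bm{u})=\mathop{\rm argmax}_{y\in\{1,\dots,K+M\}}u_y$.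
   Context: $\Delta^K$ is the probability simplex in $\mathbb{R}^K$; $\Delta^K\times[0,1]^M$ means the first $K$ coordinates lie in $\Delta^K$ and each of the last $M$ lies in $[0,1]$. This is the multi-expert version of the asymmetric softmax, with one extra coordinate per expert. *)

(* Defs.v *)
From HB Require Import structures.
From mathcomp Require Import all_boot all_order all_algebra.
From mathcomp Require Import all_classical all_reals all_analysis.
Set Implicit Arguments. Unset Strict Implicit. Unset Printing Implicit Defensive.
Import Order.TTheory GRing.Theory Num.Theory.
Local Open Scope ring_scope.

Section Psi.
Variables (R : realType) (K M : nat).

Definition sumexpK (u : 'I_(K + M) -> R) : R :=
  \sum_(i < K) expR (u (lshift M i)).

(* max_{y' in 1..K} exp(u_{y'}); the fold starts at 0, which is harmless
   since every exp value is > 0 and K > 1 (nonempty range). *)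
Definition maxexpK (u : 'I_(K + M) -> R) : R :=
  \big[Num.max/0]_(i < K) expR (u (lshift M i)).

(* The multi-expert asymmetric softmax psi~^M. Indices 0..K-1 are the K
   classes, indices K..K+M-1 the M extra coordinates. *)
Definition psiM (u : 'I_(K + M) -> R) (y : 'I_(K + M)) : R :=
  match fintype.split y with
  | inl _ => expR (u y) / sumexpK u
  | inr _ => expR (u y) / (sumexpK u + expR (u y) - maxexpK u)
  end.

Definition in_simplex_box (p : 'I_(K + M) -> R) : Prop :=
  (forall i : 'I_K, 0 <= p (lshift M i)) /\
  \sum_(i < K) p (lshift M i) = 1 /\
  (forall j : 'I_M, 0 <= p (rshift K j) <= 1).

End Psi.

Definition argmax (R : realType) (T : finType) (f : T -> R) : {set T} :=
  [set y | [forall y', f y' <= f y]].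

(* Main.v *)
Require Import Defs.
From mathcomp Require Import all_boot all_order all_algebra.
From mathcomp Require Import all_classical all_reals all_analysis.
Import Order.TTheory GRing.Theory Num.Theory.
Local Open Scope ring_scope.

Lemma gmono {R : realType} {a t s : R} : 0 < a -> 0 < t -> 0 < s ->
  (t / (a + t) <= s / (a + s)) = (t <= s).
Proof.
move=> ha ht hs.
have hat : 0 < a + t by rewrite addr_gt0.
have has : 0 < a + s by rewrite addr_gt0.
rewrite ler_pdivrMr // mulrAC ler_pdivlMr // !mulrDr (mulrC s t) lerD2r.
by rewrite (ler_pM2r ha).
Qed.

Theorem proposition2 (R : realType) (K M : nat) (hK : (1 < K)%N) (hM : (1 <= M)%N)
  (u : 'I_(K + M) -> R) :
  in_simplex_box (psiM u) /\ argmax (psiM u) = argmax u.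
Proof.
set E := fun i => expR (u i).
have Epos i : 0 < E i by exact: expR_gt0.
set S := sumexpK u. set m := maxexpK u.
have hK0 : (0 < K)%N by apply: ltn_trans hK.
pose k0 : 'I_K := Ordinal hK0.
have Lm i : E (lshift M i) <= m by rewrite /m /maxexpK; exact: (Order.TotalTheory.le_bigmax _ (fun i => E (lshift M i))).
have [i0 _ Hi0] : {i0 | i0 \in xpredT & m = E (lshift M i0)}.
  case: (@Order.TotalTheory.eq_bigmax _ _ _ 0 k0 xpredT (fun i => E (lshift M i)) isT (fun i _ => ltW (Epos _))) => [j Pj Hj].
  by exists j.


have Sm : m < S.
  pose k1 : 'I_K := if (val i0 == 0)%N then Ordinal hK else k0.
  have k1i0 : k1 != i0.
    rewrite /k1; case: ifP => /eqP h; apply/eqP => e.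
      by have := congr1 val e; rewrite /= h.
    by apply: h; rewrite -e.
  rewrite /S /sumexpK (bigD1 i0) //= -/E Hi0 ltrDl.
  rewrite (bigD1 k1) //=; apply: ltr_pwDl; first exact: Epos.
  by apply: sumr_ge0 => i _; exact/ltW/Epos.
set a := S - m.
have mpos : 0 < m by rewrite Hi0.
have ha : 0 < a by rewrite subr_gt0.
have SE : S = a + m by rewrite /a subrK.
have psi_l i : psiM u (lshift M i) = E (lshift M i) / S.
  rewrite /psiM; case: splitP => [j _|k /= eq] //.
  by have := ltn_ord i; rewrite eq ltnNge leq_addr.
have psi_r j : psiM u (rshift K j) = E (rshift K j) / (a + E (rshift K j)).
  rewrite /psiM; case: splitP => [i /= eq|k _]; last by rewrite /a addrAC.
  by have := ltn_ord i; rewrite -eq ltnNge leq_addr.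
have cases y : (psiM u y = E y / (a + m) /\ E y <= m) \/
               psiM u y = E y / (a + E y).
  case: (splitP y) => [i eq|k eq].
    have -> : y = lshift M i by apply: val_inj.
    by left; rewrite psi_l SE.
  have -> : y = rshift K k by apply: val_inj.
  by right.
have hA y : psiM u y <= E y / (a + E y).
  case: (cases y) => [[-> h]|-> //].
  rewrite ler_wpM2l ?(ltW (Epos _)) // lef_pV2 ?posrE ?(addr_gt0 ha (Epos _)) ?(addr_gt0 ha mpos) //.
  by rewrite lerD2l.
have hB y : m <= E y -> psiM u y = E y / (a + E y).
  case: (cases y) => [[-> h] hm|-> //].
  by have -> : E y = m by apply/eqP; rewrite eq_le h hm.
have hE : psiM u (lshift M i0) = m / (a + m) by rewrite hB Hi0.
split.
  have Spos : 0 < S := lt_trans mpos Sm.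
  split; first by move=> i; rewrite psi_l; apply: divr_ge0; apply: ltW.
  split.
    under eq_bigr do rewrite psi_l.
    by rewrite -mulr_suml divff // lt0r_neq0.
  move=> j; have hp := Epos (rshift K j); have hp2 := addr_gt0 ha hp.
  rewrite psi_r divr_ge0 ?ltW //=.
  by rewrite ltr_pdivrMr // mul1r ltrDr.
apply/setP => y; rewrite !inE.
apply/forallP/forallP => H y'.
  have my : m <= E y.
    rewrite -(gmono ha mpos (Epos y)) -hE.
    exact: le_trans (H _) (hA y).
  rewrite -ler_expR -/(E y') -/(E y).
  case: (lerP m (E y')) => hm; last exact: ltW (lt_le_trans hm my).
  by rewrite -(gmono ha (Epos _) (Epos _)) -hB // -hB //; exact: H.
have Hy' y'' : E y'' <= E y by rewrite /E ler_expR; exact: H.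
have my : m <= E y by rewrite Hi0.
rewrite (hB y my); apply: (le_trans (hA y')).
by rewrite (gmono ha (Epos _) (Epos _)).
Qed.
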